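(* Let $A\hookrightarrow B$ be a $G$-Galois extension of $\mathbb{Z}$-graded commutative rings, where $G$ is a finite group. If $A$ is nontrivial only in grade $0$ (i.e. $A_n=0$ for all $n\neq 0$), then $B$ is also nontrivial only in grade $0$.
   Context: All gradings are $\mathbb{Z}$-gradings and rings are unital with unital maps. For commutative (graded) rings $A\subseteq B$ and a finite group $G$, the extension $A\hookrightarrow B$ is called $G$-Galois if $G$ is a subgroup of $\mathrm{Aut}(B/A)$ (in the graded case, $G$ acts by automorphisms preserving the grading), the fixed ring satisfies $B^G=A$, and the map $h:B\otimes_A B\to \mathrm{Map}(G,B)\cong\prod_{g\in G}B$, $h(x\otimes y)(g)=x\cdot g(y)$, is an isomorphism of $B$-algebras. *)

(* Defs.v *)
From HB Require Import structures.
From mathcomp Require Import all_boot all_order all_algebra all_fingroup.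
Set Implicit Arguments. Unset Strict Implicit. Unset Printing Implicit Defensive.
Import GRing.Theory.
Local Open Scope ring_scope.

(* A Z-grading of a commutative ring R: a family of additive subgroups R_n
   (given by membership predicates) with 1 in R_0, R_m R_n ⊆ R_(m+n),
   and R = ⊕_n R_n (every element is a finite sum of homogeneous elements of
   distinct degrees, and such a decomposition of 0 is trivial). *)
Definition is_Zgrading (R : comPzRingType) (Rn : int -> R -> Prop) : Prop :=
  (forall n, Rn n 0) /\
      (forall n x y, Rn n x -> Rn n y -> Rn n (x - y)) /\
      Rn 0%R 1 /\
      (forall m n x y, Rn m x -> Rn n y -> Rn (m + n)%R (x * y)) /\
      (forall b : R, exists (s : seq int) (f : int -> R),
          [/\ uniq s, (forall n, Rn n (f n)) & b = \sum_(n <- s) f n]) /\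
      (forall (s : seq int) (f : int -> R), uniq s -> (forall n, Rn n (f n)) ->
          \sum_(n <- s) f n = 0 -> forall n, n \in s -> f n = 0).

(* The tensor product B ⊗_A B (A acting through iota : A -> B), presented as
   formal finite sums  Σ x_i ⊗ y_i  (lists of pairs) modulo the congruence
   generated by biadditivity, A-balancedness and 0 ⊗ y = 0. [tensor_eq s t]
   means that s and t represent the same element of B ⊗_A B. *)
Inductive tensor_eq (A B : comPzRingType) (iota : A -> B) :
    seq (B * B) -> seq (B * B) -> Prop :=
  | te_refl s : tensor_eq iota s s
  | te_sym s t : tensor_eq iota s t -> tensor_eq iota t s
  | te_trans s t u : tensor_eq iota s t -> tensor_eq iota t u -> tensor_eq iota s u
  | te_perm s t : perm_eq s t -> tensor_eq iota s t
  | te_cat s1 t1 s2 t2 : tensor_eq iota s1 t1 -> tensor_eq iota s2 t2 ->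
      tensor_eq iota (s1 ++ s2) (t1 ++ t2)
  | te_addl x x' y : tensor_eq iota [:: (x + x', y)] [:: (x, y); (x', y)]
  | te_addr x y y' : tensor_eq iota [:: (x, y + y')] [:: (x, y); (x, y')]
  | te_bal x a y : tensor_eq iota [:: (x * iota a, y)] [:: (x, iota a * y)]
  | te_zero y : tensor_eq iota [:: (0, y)] [::].

Definition is_ring_action (gT : finGroupType) (B : comPzRingType)
    (act : gT -> B -> B) : Prop :=
  [/\ (forall g x y, act g (x + y) = act g x + act g y),
      (forall g x y, act g (x * y) = act g x * act g y),
      (forall g, act g 1 = 1),
      (forall x, act 1%g x = x) &
      (forall g h x, act (g * h)%g x = act g (act h x))].

Definition graded_Galois (gT : finGroupType) (A B : comPzRingType)
    (An : int -> A -> Prop) (Bn : int -> B -> Prop)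
    (iota : {rmorphism A -> B}) (act : gT -> B -> B) : Prop :=
  is_Zgrading An /\ is_Zgrading Bn /\
      injective iota /\ (forall n a, An n a -> Bn n (iota a)) /\
      (* G is a subgroup of Aut(B/A) of grading-preserving automorphisms *)
      is_ring_action act /\
      (forall g, (forall x, act g x = x) -> g = 1%g) /\
      (forall g a, act g (iota a) = iota a) /\
      (forall g n b, Bn n b -> Bn n (act g b)) /\
      (forall b, (forall g, act g b = b) -> exists a, b = iota a) /\
      (* h : B ⊗_A B -> Map(G,B), x ⊗ y |-> (g |-> x g(y)) is surjective *)
      (forall f : gT -> B, exists s : seq (B * B),
          forall g, f g = \sum_(p <- s) p.1 * act g p.2) /\
      (* ... and injective *)
      (forall s : seq (B * B),
          (forall g, \sum_(p <- s) p.1 * act g p.2 = 0) -> tensor_eq iota s [::]).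

(* Main.v *)
Require Import Defs.
From HB Require Import structures.
From mathcomp Require Import all_boot all_order all_algebra all_fingroup.
From mathcomp Require Import zify.
From Stdlib Require Import ClassicalEpsilon.
Set Implicit Arguments. Unset Strict Implicit. Unset Printing Implicit Defensive.
Import GRing.Theory.
Local Open Scope ring_scope.

Section SUmx.
Variable R : comPzRingType.
Variable k : nat.
Notation M := 'M[R]_k.

Definition SU (A : M) := forall i j : 'I_k, (j <= i)%N -> A i j = 0.

Lemma SU0 : SU 0.
Proof. by move=> i j _; rewrite mxE. Qed.

Lemma SUD A B : SU A -> SU B -> SU (A + B).
Proof. by move=> hA hB i j hij; rewrite mxE hA // hB // addr0. Qed.

Lemma SUN A : SU A -> SU (- A).
Proof. by move=> hA i j hij; rewrite mxE hA // oppr0. Qed.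

Lemma SUB A B : SU A -> SU B -> SU (A - B).
Proof. by move=> hA hB; apply: SUD => //; apply: SUN. Qed.

Lemma SU_sum (I : Type) (r : seq I) (F : I -> M) :
  (forall i, SU (F i)) -> SU (\sum_(i <- r) F i).
Proof.
move=> h; elim: r => [|a r IH]; first by rewrite big_nil; exact: SU0.
by rewrite big_cons; apply: SUD.
Qed.

Lemma SU_scalar a (A : M) : SU A -> SU (a%:M * A).
Proof.
move=> hA i j hij; rewrite -mulmxE mul_scalar_mx mxE hA // mulr0 //.
Qed.

Lemma SU_scalarr a (A : M) : SU A -> SU (A * a%:M).
Proof.
move=> hA i j hij; rewrite -mulmxE mul_mx_scalar mxE hA // mulr0 //.
Qed.

Lemma SUM A B : SU A -> SU B -> SU (A * B).
Proof.
move=> hA hB i j hij; rewrite -mulmxE mxE big1 // => l _.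
case: (leqP l i) => hl; first by rewrite hA // mul0r.
by rewrite hB ?mulr0 // (leq_trans hij) // ltnW.
Qed.

Lemma SU_powE (D : M) : SU D -> forall n (i j : 'I_k), (j < i + n)%N -> (D ^+ n) i j = 0.
Proof.
move=> hD; elim=> [|n IH] i j hij.
  by rewrite expr0 mxE; case: eqVneq => // e; move: hij; rewrite e addn0 ltnn.
rewrite exprSr -mulmxE mxE big1 // => l _.
case: (ltnP l (i + n)) => hl; first by rewrite IH // mul0r.
by rewrite hD ?mulr0 //; move: hij hl; rewrite addnS; lia.
Qed.

Lemma SU_nil (D : M) : SU D -> D ^+ k = 0.
Proof.
move=> hD; apply/matrixP => i j; rewrite (SU_powE hD) ?mxE //.
by rewrite (leq_trans (ltn_ord j)) // leq_addl.
Qed.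

Lemma SU_pow (D : M) n : SU D -> SU (D ^+ n.+1).
Proof.
move=> hD; elim: n => [|n IH]; first by rewrite expr1.
by rewrite exprS; apply: SUM.
Qed.

Lemma SU_cancel (Z D : M) : SU D -> Z * (1 + D) = 0 -> Z = 0.
Proof.
move=> hD hZ.
have hZ' : Z = - (Z * D) by apply/eqP; rewrite -addr_eq0 -[X in X + _]mulr1 -mulrDr hZ.
have e : forall n, Z = Z * (- D) ^+ n.
  elim=> [|n IH]; first by rewrite expr0 mulr1.
  by rewrite exprSr mulrA -IH mulrN.
by rewrite (e k) SU_nil ?mulr0 //; apply: SUN.
Qed.
End SUmx.

Lemma geom_l (R : pzRingType) (x : R) n : (1 - x) * \sum_(j < n) x ^+ j = 1 - x ^+ n.
Proof.
elim: n => [|n IH]; first by rewrite big_ord0 mulr0 expr0 subrr.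
rewrite big_ord_recr /= mulrDr IH mulrBl mul1r -exprS.
by rewrite addrA subrK.
Qed.

Lemma geom_r (R : pzRingType) (x : R) n : (\sum_(j < n) x ^+ j) * (1 - x) = 1 - x ^+ n.
Proof.
elim: n => [|n IH]; first by rewrite big_ord0 mul0r expr0 subrr.
rewrite big_ord_recr /= mulrDl IH mulrBr mulr1 -exprSr.
by rewrite addrA subrK.
Qed.

Section Cmx.
Variable R : comPzRingType.
Variable m : nat.
Notation k := m.+1.
Notation M := 'M[R]_k.

Definition Nmx : M := \matrix_(i, j) ((i.+1 == j)%N)%:R.

Lemma SU_N : SU Nmx.
Proof. move=> i j hij; rewrite mxE; case: eqP => // e; lia. Qed.

Lemma Npow n (i j : 'I_k) : (Nmx ^+ n) i j = ((i + n == j)%N)%:R.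
Proof.
elim: n i j => [|n IH] i j.
  by rewrite expr0 addn0 mxE.
rewrite exprSr -mulmxE mxE.
case: (ltnP (i + n) k) => hin.
  rewrite (bigD1 (Ordinal hin)) //= big1 ?addr0.
    by rewrite IH mxE eqxx mul1r addnS.
  move=> l hl; rewrite IH; case: eqP => e; last by rewrite mul0r.
  by move: hl; rewrite -(inj_eq val_inj) /= e eqxx.
rewrite big1.
  case: eqP => // e; have := ltn_ord j; lia.
move=> l _; rewrite IH; case: eqP => e; last by rewrite mul0r.
have := ltn_ord l; lia.
Qed.

Definition cc : M := 1 + Nmx.
Definition ci : M := \sum_(j < k) (- Nmx) ^+ j.

Lemma cc_ci : cc * ci = 1.
Proof.
have := geom_l (- Nmx) k; rewrite opprK (SU_nil (SUN SU_N)) subr0; exact.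
Qed.

Lemma ci_cc : ci * cc = 1.
Proof.
have := geom_r (- Nmx) k; rewrite opprK (SU_nil (SUN SU_N)) subr0; exact.
Qed.

Lemma comm_c : GRing.comm cc ci.
Proof. by rewrite /GRing.comm cc_ci ci_cc. Qed.

Lemma comm_pow y z : ci ^+ y * cc ^+ z = cc ^+ z * ci ^+ y.
Proof. have H := commrX z (commr_sym (commrX y comm_c)). exact H. Qed.

Definition UP (A : M) := SU (A - 1).

Lemma UP1 : UP 1.
Proof. by rewrite /UP subrr; exact: SU0. Qed.

Lemma UPM A B : UP A -> UP B -> UP (A * B).
Proof.
move=> hA hB; rewrite /UP.
have -> : A * B - 1 = (A - 1) * (B - 1) + (A - 1) + (B - 1).
  by rewrite mulrBl mulrBr !mul1r mulr1 -addrA (addrC (A - 1)) addrA subrK addrA subrK.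
apply: SUD => //; apply: SUD => //; exact: SUM.
Qed.

Lemma UPX A n : UP A -> UP (A ^+ n).
Proof.
move=> hA; elim: n => [|n IH]; first by rewrite expr0; exact: UP1.
by rewrite exprS; apply: UPM.
Qed.

Lemma UP_cc : UP cc.
Proof. by rewrite /UP /cc addrC addKr; exact: SU_N. Qed.

Lemma UP_ci : UP ci.
Proof.
rewrite /UP /ci big_ord_recl expr0 [1 + _]addrC addrK.
by apply: SU_sum => i; apply: SU_pow; apply: SUN; exact: SU_N.
Qed.

Lemma cpow_indep a b a' b' : (a + b' = a' + b)%N ->
  cc ^+ a * ci ^+ b = cc ^+ a' * ci ^+ b'.
Proof.
move=> e.
have h1 : forall x y z, cc ^+ x * ci ^+ y = cc ^+ (x + z) * ci ^+ (y + z).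
  move=> x y z.
  rewrite !exprD -[LHS]mulr1 -(expr1n _ z) -cc_ci (exprMn_comm _ comm_c).
  rewrite !mulrA; congr (_ * _); rewrite -!mulrA; congr (_ * _).
  exact: comm_pow.
rewrite (h1 a b b') (h1 a' b' b) e; congr (_ * _); rewrite addnC //.
Qed.

Definition cz (z : int) : M :=
  match z with Posz a => cc ^+ a | Negz b => ci ^+ b.+1 end.

Lemma cz_eq (a b : nat) : cz (a%:Z - b%:Z) = cc ^+ a * ci ^+ b.
Proof.
case E: (a%:Z - b%:Z) => [p|q] /=.
  rewrite -[cc ^+ p]mulr1 -(expr0 ci); apply: cpow_indep; lia.
rewrite -[ci ^+ _]mul1r -(expr0 cc); apply: cpow_indep.
move: E; rewrite NegzE; lia.
Qed.

Lemma cz_split z : exists a b : nat, z = a%:Z - b%:Z.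
Proof.
case: z => [p|q]; first by exists p, 0%N; rewrite subr0.
by exists 0%N, q.+1; rewrite NegzE sub0r.
Qed.

Lemma czD z w : cz (z + w) = cz z * cz w.
Proof.
have [a [b ->]] := cz_split z; have [a' [b' ->]] := cz_split w.
have -> : a%:Z - b%:Z + (a'%:Z - b'%:Z) = (a + a')%N%:Z - (b + b')%N%:Z.
  by rewrite !PoszD opprD addrACA.
rewrite !cz_eq !exprD !mulrA; congr (_ * _); rewrite -!mulrA; congr (_ * _).
by rewrite comm_pow.
Qed.

Lemma cz0 : cz 0 = 1.
Proof. by rewrite /= expr0. Qed.

Lemma UP_cz z : UP (cz z).
Proof. by case: z => [p|q] /=; apply: UPX; [exact: UP_cc | exact: UP_ci]. Qed.

Lemma cc_entry : (cc ^+ m) ord0 ord_max = 1.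
Proof.
rewrite /cc addrC exprD1n.
rewrite summxE (bigD1 ord_max) //= big1 ?addr0.
  by rewrite mulmxnE Npow add0n eqxx binn mulr1n.
move=> i hi; rewrite mulmxnE Npow add0n.
case: eqP => e; last by rewrite mul0rn.
by move: hi; rewrite -(inj_eq val_inj) /= e eqxx.
Qed.

End Cmx.

Lemma sum_if_sub (V : nmodType) (G : int -> V) (s L : seq int) :
  uniq s -> uniq L -> {subset s <= L} ->
  \sum_(l <- L) (if l \in s then G l else 0) = \sum_(l <- s) G l.
Proof.
move=> us uL sL; rewrite -big_mkcond -big_filter; apply: perm_big.
apply: uniq_perm; first exact: filter_uniq.
  done.
by move=> x; rewrite mem_filter; case xs: (x \in s) => //=; rewrite sL.
Qed.

Section Psi.
Variable B : comPzRingType.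
Variable Bn : int -> B -> Prop.
Hypothesis Hgr : is_Zgrading Bn.
Variable m : nat.
Notation k := m.+1.
Notation M := 'M[B]_k.

Lemma g0 n : Bn n 0. Proof. exact: Hgr.1. Qed.
Lemma gB n x y : Bn n x -> Bn n y -> Bn n (x - y). Proof. exact: Hgr.2.1. Qed.
Lemma gN n x : Bn n x -> Bn n (- x).
Proof. by move=> h; rewrite -sub0r; apply: gB => //; apply: g0. Qed.
Lemma gD n x y : Bn n x -> Bn n y -> Bn n (x + y).
Proof. by move=> hx hy; rewrite -[y]opprK; apply: gB => //; apply: gN. Qed.
Lemma gM a b x y : Bn a x -> Bn b y -> Bn (a + b) (x * y).
Proof. exact: Hgr.2.2.2.1. Qed.
Lemma gdec b : exists (s : seq int) (f : int -> B),
  [/\ uniq s, (forall n, Bn n (f n)) & b = \sum_(n <- s) f n].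
Proof. exact: Hgr.2.2.2.2.1. Qed.
Lemma guniq (s : seq int) (f : int -> B) : uniq s -> (forall n, Bn n (f n)) ->
  \sum_(n <- s) f n = 0 -> forall n, n \in s -> f n = 0.
Proof. exact: Hgr.2.2.2.2.2. Qed.

Definition dec_s (b : B) : seq int := proj1_sig (constructive_indefinite_description _ (gdec b)).
Lemma dec_s_spec b : exists f : int -> B,
  [/\ uniq (dec_s b), (forall n, Bn n (f n)) & b = \sum_(n <- dec_s b) f n].
Proof. exact: (proj2_sig (constructive_indefinite_description _ (gdec b))). Qed.
Definition dec_f (b : B) : int -> B := proj1_sig (constructive_indefinite_description _ (dec_s_spec b)).
Lemma dec_spec b :
  [/\ uniq (dec_s b), (forall n, Bn n (dec_f b n)) & b = \sum_(n <- dec_s b) dec_f b n].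
Proof. exact: (proj2_sig (constructive_indefinite_description _ (dec_s_spec b))). Qed.

Definition psi (b : B) : M := \sum_(l <- dec_s b) cz B m l * (dec_f b l)%:M.

Definition ext (s : seq int) (f : int -> B) l := if l \in s then f l else 0.

Lemma ext_hom s f : (forall n, Bn n (f n)) -> forall n, Bn n (ext s f n).
Proof. by move=> h n; rewrite /ext; case: ifP => _; [apply: h | apply: g0]. Qed.

Lemma ext_sum s f L : uniq s -> uniq L -> {subset s <= L} ->
  \sum_(l <- L) ext s f l = \sum_(l <- s) f l.
Proof. exact: sum_if_sub. Qed.

Lemma ext_sumM s f L : uniq s -> uniq L -> {subset s <= L} ->
  \sum_(l <- L) cz B m l * (ext s f l)%:M = \sum_(l <- s) cz B m l * (f l)%:M.
Proof.
move=> us uL sL; rewrite -(sum_if_sub (fun l => cz B m l * (f l)%:M) us uL sL).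
by apply: eq_bigr => l _; rewrite /ext; case: ifP => // _; rewrite raddf0 mulr0.
Qed.

Lemma psi_uniq b s f : uniq s -> (forall n, Bn n (f n)) -> b = \sum_(l <- s) f l ->
  psi b = \sum_(l <- s) cz B m l * (f l)%:M.
Proof.
move=> us hf hb; have [u0 h0 e0] := dec_spec b.
set s0 := dec_s b; set f0 := dec_f b.
set L := undup (s0 ++ s).
have uL : uniq L by exact: undup_uniq.
have s0L : {subset s0 <= L} by move=> x hx; rewrite mem_undup mem_cat hx.
have sL : {subset s <= L} by move=> x hx; rewrite mem_undup mem_cat hx orbT.
have hz : forall l, l \in L -> ext s0 f0 l - ext s f l = 0.
  apply: guniq => //.
    by move=> n; apply: gB; apply: ext_hom.
  by rewrite sumrB !ext_sum // -e0 -hb subrr.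
rewrite /psi -/s0 -/f0 -(ext_sumM f0 u0 uL s0L) -(ext_sumM f us uL sL).
apply: eq_big_seq => l hl; move/eqP: (hz l hl); rewrite subr_eq0 => /eqP -> //.
Qed.

Lemma psi_hom l x : Bn l x -> psi x = cz B m l * x%:M.
Proof.
move=> hx; rewrite (@psi_uniq x [:: l] (fun n => if n == l then x else 0)) //.
- by rewrite big_seq1 eqxx.
- by move=> n; case: eqP => [->|_] //; apply: g0.
- by rewrite big_seq1 eqxx.
Qed.

Lemma psi0 : psi 0 = 0.
Proof. by rewrite (@psi_hom 0 0) ?raddf0 ?mulr0 //; apply: g0. Qed.

Lemma psiD x y : psi (x + y) = psi x + psi y.
Proof.
have [s1 [f1 [u1 h1 e1]]] := gdec x.
have [s2 [f2 [u2 h2 e2]]] := gdec y.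
set L := undup (s1 ++ s2).
have uL : uniq L by exact: undup_uniq.
have s1L : {subset s1 <= L} by move=> z hz; rewrite mem_undup mem_cat hz.
have s2L : {subset s2 <= L} by move=> z hz; rewrite mem_undup mem_cat hz orbT.
have ex : x = \sum_(l <- L) ext s1 f1 l by rewrite ext_sum.
have ey : y = \sum_(l <- L) ext s2 f2 l by rewrite ext_sum.
rewrite (psi_uniq uL (ext_hom s1 h1) ex) (psi_uniq uL (ext_hom s2 h2) ey).
rewrite (@psi_uniq (x + y) L (fun l => ext s1 f1 l + ext s2 f2 l)) //.
- by rewrite -big_split; apply: eq_bigr => l _; rewrite raddfD mulrDr.
- by move=> n; apply: gD; apply: ext_hom.
- by rewrite big_split -ex -ey.
Qed.

Lemma psi_sum (I : Type) (r : seq I) (F : I -> B) :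
  psi (\sum_(i <- r) F i) = \sum_(i <- r) psi (F i).
Proof. exact: (big_morph psi psiD psi0). Qed.

Lemma sc_comm (a : B) (X : M) : a%:M * X = X * a%:M.
Proof. by rewrite -mulmxE scalar_mxC. Qed.

Lemma psiM x y : psi (x * y) = psi x * psi y.
Proof.
have [s1 [f1 [u1 h1 e1]]] := gdec x.
have [s2 [f2 [u2 h2 e2]]] := gdec y.
have ex : psi x = \sum_(l <- s1) cz B m l * (f1 l)%:M.
  by rewrite e1 psi_sum; apply: eq_bigr => l _; apply: psi_hom.
have ey : psi y = \sum_(l <- s2) cz B m l * (f2 l)%:M.
  by rewrite e2 psi_sum; apply: eq_bigr => l _; apply: psi_hom.
rewrite ex ey e1 e2 big_distrlr /= psi_sum big_distrl /=; apply: eq_bigr => l _.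
rewrite psi_sum big_distrr /=; apply: eq_bigr => l' _.
rewrite (psi_hom (gM (h1 l) (h2 l'))) czD.
rewrite -mulmxE scalar_mxM !mulmxE.
rewrite -!mulrA; congr (_ * _); rewrite !mulrA; congr (_ * _).
by rewrite sc_comm.
Qed.

Lemma psi_SU y : SU (psi y - y%:M).
Proof.
have [s [f [_ h e]]] := gdec y.
have -> : psi y - y%:M = \sum_(l <- s) (cz B m l - 1) * (f l)%:M.
  rewrite e psi_sum raddf_sum /= -sumrB; apply: eq_bigr => l _.
  by rewrite (psi_hom (h l)) mulrBl mul1r.
by apply: SU_sum => l; apply: SU_scalarr; apply: UP_cz.
Qed.

Definition Fs (s : seq (B * B)) : M := \sum_(p <- s) (p.1)%:M * psi p.2.

Lemma Fs_tensor (A : comPzRingType) (iota : A -> B) :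
  (forall a, psi (iota a) = (iota a)%:M) ->
  forall s t, tensor_eq iota s t -> Fs s = Fs t.
Proof.
move=> hi s t; elim=> {s t}.
- by [].
- by move=> s t _ ->.
- by move=> s t u _ -> _ ->.
- by move=> s t hp; apply: perm_big.
- by move=> s1 t1 s2 t2 _ h1 _ h2; rewrite /Fs in h1 h2 *; rewrite !big_cat h1 h2.
- by move=> x x' y; rewrite /Fs !big_cons !big_nil /= !addr0 raddfD mulrDl.
- by move=> x y y'; rewrite /Fs !big_cons !big_nil /= !addr0 psiD mulrDr.
- move=> x a y; rewrite /Fs !big_cons !big_nil /= !addr0 psiM hi.
  by rewrite -mulmxE scalar_mxM !mulmxE mulrA.
- by move=> y; rewrite /Fs big_cons big_nil /= raddf0 mul0r addr0.
Qed.

End Psi.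

Lemma final_step (B : comPzRingType) (m : nat) (b : B) : (0 < m)%N ->
  cc B m ^+ m * b%:M = b%:M -> b = 0.
Proof.
move=> hm e.
have := congr1 (fun X : 'M[B]_m.+1 => X ord0 ord_max) e.
rewrite /= -mulmxE mul_mx_scalar !mxE cc_entry mulr1 /=.
by case: m hm e => // m' _ _ ->.
Qed.

Lemma cz_step (B : comPzRingType) (n : int) (b : B) : n != 0 ->
  cz B `|n|%N n * b%:M = b%:M -> b = 0.
Proof.
case: n => [p|q] /= hn e.
  apply: (@final_step B p) => //; by case: p hn e.
apply: (@final_step B q.+1) => //.
rewrite -{1}e mulrA -(exprMn_comm _ (@comm_c B q.+1)) cc_ci expr1n mul1r //.
Qed.

Theorem theorem3p2 (gT : finGroupType) (A B : comPzRingType)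
    (An : int -> A -> Prop) (Bn : int -> B -> Prop)
    (iota : {rmorphism A -> B}) (act : gT -> B -> B) :
  graded_Galois An Bn iota act ->
  (forall n : int, n != 0%R -> forall a : A, An n a -> a = 0%R) ->
  forall n : int, n != 0%R -> forall b : B, Bn n b -> b = 0%R.
Proof.
move=> [HA [HB [inj [homA [ract [faith [fixA [gpres [fixd [surj injh]]]]]]]]]].
move=> hA0 n hn b hb.
have [actD actM act1 act1x actgh] := ract.
set m := `|n|%N.
have hiota : forall a, psi HB m (iota a) = (iota a)%:M.
  move=> a; have [s [f [_ hf ->]]] := gdec HA a.
  have h0 : An 0 (\sum_(l <- s) f l).
    apply: (big_ind (An 0)); first exact: (g0 HA).
      by move=> x y; apply: gD.
    move=> l _; case: (eqVneq l 0) => [<-|hl] //.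
    by rewrite (hA0 l hl (f l) (hf l)); apply: (g0 HA).
  by rewrite (psi_hom HB m (homA _ _ h0)) /= mul1r.
have [s hs] := surj (fun g => if g == 1%g then 1 else 0).
set t := [seq (b * p.1, p.2) | p <- s] ++ [seq (- p.1, b * p.2) | p <- s].
have ht : forall g, \sum_(p <- t) p.1 * act g p.2 = 0.
  move=> g; rewrite big_cat !big_map /=.
  have -> : \sum_(p <- s) b * p.1 * act g p.2 = b * \sum_(p <- s) p.1 * act g p.2.
    by rewrite mulr_sumr; apply: eq_bigr => p _; rewrite mulrA.
  have -> : \sum_(p <- s) - p.1 * act g (b * p.2) = - (act g b * \sum_(p <- s) p.1 * act g p.2).
    rewrite mulr_sumr -sumrN; apply: eq_bigr => p _.
    by rewrite actM mulNr mulrCA.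
  rewrite -hs; case: eqP => [->|_]; first by rewrite act1x subrr.
  by rewrite !mulr0 oppr0 addr0.
have te := injh t ht.
have F0 := Fs_tensor hiota te.
set E := Fs HB m s.
have hZ : (b%:M - psi HB m b) * E = 0.
  move: F0; rewrite /Fs big_nil big_cat !big_map /= => <-.
  rewrite mulrBl /E /Fs mulr_sumr mulr_sumr -sumrN; congr (_ + _).
    by apply: eq_bigr => p _; rewrite -mulmxE scalar_mxM !mulmxE mulrA.
  apply: eq_bigr => p _; rewrite raddfN /= mulNr psiM.
  by rewrite !mulrA (sc_comm p.1 (psi HB m b)).
have hs1 : \sum_(p <- s) p.1 * p.2 = 1.
  have := hs 1%g; rewrite eqxx => ->; apply: eq_bigr => p _; by rewrite act1x.
have hD : SU (E - 1).
  have -> : E - 1 = \sum_(p <- s) (p.1)%:M * (psi HB m p.2 - (p.2)%:M).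
    rewrite /E /Fs -[X in _ - X]/((1 : B)%:M) -hs1 raddf_sum /= -sumrB.
    by apply: eq_bigr => p _; rewrite mulrBr -mulmxE scalar_mxM.
  by apply: SU_sum => p; apply: SU_scalar; apply: psi_SU.
have hZ0 : b%:M - psi HB m b = 0.
  apply: (SU_cancel hD); by rewrite [1 + _]addrC subrK.
move/eqP: hZ0; rewrite subr_eq0 (psi_hom HB m hb) eq_sym => /eqP e.
exact: (cz_step hn e).
Qed.
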